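(* Let $\mathcal{G}=(V,E)$ be a connected undirected graph with node set $V=\{1,\dots,n\}$, and for each node $i$ let $N^i$ denote its set of neighbors. Consider the time-varying function $F(\mathbf{y};t)=f(\mathbf{y};t)+g(\mathbf{y};t)$ of $\mathbf{y}=(\mathbf{y}^1;\dots;\mathbf{y}^n)\in\mathbb{R}^{np}$, $\mathbf{y}^i\in\mathbb{R}^p$, where $f(\mathbf{y};t)=\sum_{i\in V}f^i(\mathbf{y}^i;t)$ and $g(\mathbf{y};t)=\sum_{i\in V}g^{i,i}(\mathbf{y}^i;t)+\sum_{(i,j)\in E}g^{i,j}(\mathbf{y}^i,\mathbf{y}^j;t)$, all functions being twice continuously differentiable in $\mathbf{y}$ and such that $\nabla_{t\mathbf{y}}F$ exists. Fix a point $(\mathbf{y}_k,t_k)$ and define $$\mathbf{D}_k:=\nabla_{\mathbf{y}\mathbf{y}}f(\mathbf{y}_k;t_k)+\mathrm{diag}[\nabla_{\mathbf{y}\mathbf{y}}g(\mathbf{y}_k;t_k)],\qquad \mathbf{B}_k:=\mathrm{diag}[\nabla_{\mathbf{y}\mathbf{y}}g(\mathbf{y}_k;t_k)]-\nabla_{\mathbf{y}\mathbf{y}}g(\mathbf{y}_k;t_k),$$ where $\mathrm{diag}[\cdot]$ keeps the $p\times p$ diagonal blocks and sets all other blocks to zero, and assume $\mathbf{D}_k$ is positive definite. For an integer $K\ge 0$ let $$\mathbf{H}_{k,(K)}^{-1}:=\mathbf{D}_k^{-1/2}\sum_{\tau=0}^{K}\big(\mathbf{D}_k^{-1/2}\mathbf{B}_k\mathbf{D}_k^{-1/2}\big)^{\tau}\mathbf{D}_k^{-1/2},\qquad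 \mathbf{p}_{k,(K)}:=-\mathbf{H}_{k,(K)}^{-1}\nabla_{t\mathbf{y}}F(\mathbf{y}_k;t_k).$$ Denote by $\mathbf{D}_k^{ij},\mathbf{B}_k^{ij}$ the $(i,j)$-th $p\times p$ blocks of $\mathbf{D}_k,\mathbf{B}_k$ and by $\nabla_{t\mathbf{y}}F^i(\mathbf{y}_k;t_k)$ the $i$-th $p$-dimensional subvector of $\nabla_{t\mathbf{y}}F(\mathbf{y}_k;t_k)$. Define, for each node $i$, $\mathbf{p}^i_{k,(0)}:=-(\mathbf{D}_k^{ii})^{-1}\nabla_{t\mathbf{y}}F^i(\mathbf{y}_k;t_k)$ and, for $\tau=0,\dots,K-1$, $$\mathbf{p}^i_{k,(\tau+1)}:=(\mathbf{D}_k^{ii})^{-1}\Big(\sum_{j\in N^i}\mathbf{B}_k^{ij}\mathbf{p}^j_{k,(\tau)}-\nabla_{t\mathbf{y}}F^i(\mathbf{y}_k;t_k)\Big).$$ Then for every $i$, $\mathbf{p}^i_{k,(K)}$ equals the $i$-th subvector of $\mathbf{p}_{k,(K)}$.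
   Context: $\nabla_{\mathbf{y}\mathbf{y}}$ denotes the Hessian with respect to $\mathbf{y}$ and $\nabla_{t\mathbf{y}}F$ the partial derivative with respect to $t$ of the gradient $\nabla_{\mathbf{y}}F$. The matrix $\mathbf{D}_k$ is block diagonal, and the block $\mathbf{B}_k^{ij}$ for $i\ne j$ equals $-\nabla_{\mathbf{y}^i\mathbf{y}^j}g^{i,j}(\mathbf{y}_k^i,\mathbf{y}_k^j;t_k)$ if $(i,j)$ is an edge and zero otherwise; diagonal blocks of $\mathbf{B}_k$ are zero. *)

(* Defs.v *)
From HB Require Import structures.
From mathcomp Require Import all_boot all_order all_algebra.
From mathcomp Require Import all_classical all_reals all_analysis.
Unset Printing Implicit Defensive.
Import Order.TTheory GRing.Theory Num.Theory.
Import numFieldNormedType.Exports.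
Local Open Scope ring_scope.

Section Defs.
Variable R : realType.

Definition ebasis (m : nat) (a : 'I_m) : 'rV[R]_m := delta_mx 0 a.
Arguments ebasis {m} a.


Definition partial (m : nat) (h : 'rV[R]_m -> R) (y : 'rV[R]_m) (a : 'I_m) : R :=
  derive h y (ebasis a).
Arguments partial {m} h y a.


Definition C2 (m : nat) (h : 'rV[R]_m -> R) : Prop :=
  [/\ continuous h,
      (forall y a, derivable h y (ebasis a)),
      (forall a, continuous (fun z => partial h z a)),
      (forall y a b, derivable (fun z => partial h z a) y (ebasis b)) &
      (forall a b, continuous (fun z => partial (fun w => partial h w a) z b))].
Arguments C2 {m} h.


Definition hess (m : nat) (h : 'rV[R]_m -> R) (y : 'rV[R]_m) : 'M[R]_m :=
  \matrix_(a, b) partial (fun z => partial h z b) y a.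
Arguments hess {m} h y.


Definition grad_ty (m : nat) (H : 'rV[R]_m -> R -> R) (y : 'rV[R]_m) (t : R)
  : 'cV[R]_m :=
  \col_a derive (fun s : R => partial (H ^~ s) y a) t 1.
Arguments grad_ty {m} H y t.


(* Stacked vectors y = (y^1; ...; y^n) in R^{np}: coordinate (i,a) of the
   stacked vector is index mxvec_index i a (row-major stacking). *)
Definition node (n p : nat) (k : 'I_(n * p)) : 'I_n :=
  (enum_val (cast_ord (esym (@mxvec_cast n p)) k)).1.

Definition subv (n p : nat) (y : 'rV[R]_(n * p)) (i : 'I_n) : 'rV[R]_p :=
  \row_a y 0 (mxvec_index i a).

Definition subcol (n p : nat) (v : 'cV[R]_(n * p)) (i : 'I_n) : 'cV[R]_p :=
  \col_a v (mxvec_index i a) 0.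

Definition blk (n p : nat) (M : 'M[R]_(n * p)) (i j : 'I_n) : 'M[R]_p :=
  \matrix_(a, b) M (mxvec_index i a) (mxvec_index j b).

Definition blkdiag (n p : nat) (M : 'M[R]_(n * p)) : 'M[R]_(n * p) :=
  \matrix_(k, l) (if @node n p k == @node n p l then M k l else 0).

Definition ffun_ (n p : nat) (fi : 'I_n -> 'rV[R]_p -> R -> R)
  (y : 'rV[R]_(n * p)) (t : R) : R :=
  \sum_(i < n) fi i (subv n p y i) t.

(* edges are ordered pairs (i,j) with e i j *)
Definition gfun_ (n p : nat) (e : rel 'I_n) (gii : 'I_n -> 'rV[R]_p -> R -> R)
  (gij : 'I_n -> 'I_n -> 'rV[R]_p -> 'rV[R]_p -> R -> R)
  (y : 'rV[R]_(n * p)) (t : R) : R :=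
  \sum_(i < n) gii i (subv n p y i) t +
  \sum_(i < n) \sum_(j < n | e i j) gij i j (subv n p y i) (subv n p y j) t.

Definition symmx (m : nat) (M : 'M[R]_m) : Prop := M^T = M.
Arguments symmx {m} M.


Definition posdef (m : nat) (M : 'M[R]_m) : Prop :=
  symmx M /\ forall x : 'cV[R]_m, x != 0 -> 0 < (x^T *m M *m x) 0 0.
Arguments posdef {m} M.


(* S is the inverse square root D^{-1/2}: the symmetric positive definite
   square root of D^{-1} *)
Definition inv_sqrt (m : nat) (D S : 'M[R]_m) : Prop :=
  posdef S /\ S *m S = invmx D.
Arguments inv_sqrt {m} D S.


Fixpoint prec (n p : nat) (e : rel 'I_n) (D B : 'M[R]_(n * p))
  (gv : 'cV[R]_(n * p)) (tau : nat) (i : 'I_n) : 'cV[R]_p :=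
  match tau with
  | 0 => - (invmx (blk n p D i i) *m subcol n p gv i)
  | tau'.+1 => invmx (blk n p D i i) *m
      ((\sum_(j < n | e i j) blk n p B i j *m prec n p e D B gv tau' j) - subcol n p gv i)
  end.

End Defs.
Arguments node n p k.
Arguments subv {R} n p y i.
Arguments subcol {R} n p v i.
Arguments blk {R} n p M i j.
Arguments blkdiag {R} n p M.
Arguments ffun_ {R} n p fi y t.
Arguments gfun_ {R} n p e gii gij y t.
Arguments prec {R} n p e D B gv tau i.
Arguments ebasis {R m} a.
Arguments partial {R m} h y a.
Arguments C2 {R m} h.
Arguments hess {R m} h y.
Arguments grad_ty {R m} H y t.
Arguments symmx {R m} M.
Arguments posdef {R m} M.
Arguments inv_sqrt {R m} D S.

(* Main.v *)
Require Import Defs.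
From HB Require Import structures.
From mathcomp Require Import all_boot all_order all_algebra.
From mathcomp Require Import all_classical all_reals all_analysis.
Import Order.TTheory GRing.Theory Num.Theory.
Import numFieldNormedType.Exports.
Local Open Scope ring_scope.


Section S.
Variables (R : realType) (m : nat).
Lemma derive_eqdiff2 (h1 h2 : 'rV[R]_m -> R) z1 z2 v :
  (forall s : R, h1 (s *: v + z1) - h1 z1 = h2 (s *: v + z2) - h2 z2) ->
  derive h1 z1 v = derive h2 z2 v.
Proof.
move=> H; rewrite /derive; suff -> : (fun s : R => s^-1 *: ((h1 \o shift z1) (s *: v) - h1 z1)) = (fun s => s^-1 *: ((h2 \o shift z2) (s *: v) - h2 z2)) by []; apply: funext => s /=.
by rewrite H.
Qed.
Lemma derive_eqdiff (h1 h2 : 'rV[R]_m -> R) z v :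
  (forall s : R, h1 (s *: v + z) - h1 z = h2 (s *: v + z) - h2 z) ->
  derive h1 z v = derive h2 z v.
Proof. exact: derive_eqdiff2. Qed.
Lemma derive_inv0 (h : 'rV[R]_m -> R) z v :
  (forall s : R, h (s *: v + z) = h z) -> derive h z v = 0.
Proof.
move=> H; rewrite (@derive_eqdiff h (fun _ => 0)) ?derive_cst //.
by move=> s; rewrite H !subrr.
Qed.
End S.
Section Alg.
Variables (R : realType) (n p : nat).
Local Notation idx := (@mxvec_index n p).

Lemma sum_idx (F : 'I_(n * p) -> R) :
  \sum_l F l = \sum_(k < n) \sum_(c < p) F (idx k c).
Proof.
rewrite (reindex _ (curry_mxvec_bij _ _)) /= pair_big /=.
by apply: eq_bigr => -[k c].
Qed.

Lemma idx_inj (i j : 'I_n) (a b : 'I_p) : (idx i a == idx j b) = ((i == j) && (a == b)).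
Proof.
rewrite /mxvec_index (inj_eq (@cast_ord_inj _ _ _)) (inj_eq (@enum_rank_inj _)).
by rewrite xpair_eqE.
Qed.

Lemma node_idx (i : 'I_n) (a : 'I_p) : node n p (idx i a) = i.
Proof. by rewrite /node /mxvec_index cast_ordK enum_rankK. Qed.

Lemma blk_mul (A B : 'M[R]_(n * p)) i j :
  blk n p (A *m B) i j = \sum_k blk n p A i k *m blk n p B k j.
Proof.
apply/matrixP => a b; rewrite !mxE summxE sum_idx; apply: eq_bigr => k _.
by rewrite !mxE; apply: eq_bigr => c _; rewrite !mxE.
Qed.

Lemma subcol_mul (A : 'M[R]_(n * p)) v i :
  subcol n p (A *m v) i = \sum_k blk n p A i k *m subcol n p v k.
Proof.
apply/matrixP => a b; rewrite !mxE summxE sum_idx; apply: eq_bigr => k _.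
by rewrite !mxE; apply: eq_bigr => c _; rewrite !mxE.
Qed.

Lemma blk1 i : blk n p (1%:M : 'M[R]_(n * p)) i i = 1%:M.
Proof. by apply/matrixP => a b; rewrite !mxE idx_inj eqxx. Qed.

Lemma subcolN (v : 'cV[R]_(n * p)) i : subcol n p (- v) i = - subcol n p v i.
Proof. by apply/matrixP => a b; rewrite !mxE. Qed.

Lemma subcolB (v w : 'cV[R]_(n * p)) i : subcol n p (v - w) i = subcol n p v i - subcol n p w i.
Proof. by apply/matrixP => a b; rewrite !mxE. Qed.

Lemma posdef_unit (D : 'M[R]_(n * p)) : posdef D -> D \in unitmx.
Proof.
case=> _ hD; rewrite unitmxE unitfE; apply/negP => /det0P [v nz0 vD].
have : v^T != 0 by rewrite -(inj_eq (@trmx_inj _ _ _)) trmxK trmx0.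
move/hD; rewrite trmxK vD mul0mx mxE ltxx //.
Qed.

Variables (e : rel 'I_n) (D B S : 'M[R]_(n * p)) (g : 'cV[R]_(n * p)).
Hypotheses (hDu : D \in unitmx) (hS : S *m S = invmx D)
  (hDb : forall i j, i != j -> blk n p D i j = 0)
  (hBb : forall i j, ~~ e i j -> blk n p B i j = 0).

Lemma subcolD v i : subcol n p (D *m v) i = blk n p D i i *m subcol n p v i.
Proof.
rewrite subcol_mul (bigD1 i) //= big1 ?addr0 // => k hk.
by rewrite hDb ?mul0mx // eq_sym.
Qed.

Lemma Dii_unit i : blk n p D i i \in unitmx.
Proof.
have : blk n p (invmx D *m D) i i = 1%:M by rewrite mulVmx // blk1.
rewrite blk_mul (bigD1 i) //= big1 ?addr0; last first.
  by move=> k hk; rewrite hDb ?mulmx0.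
by case/mulmx1_unit.
Qed.

Lemma subcolDi v i :
  subcol n p (invmx D *m v) i = invmx (blk n p D i i) *m subcol n p v i.
Proof.
have -> : subcol n p v i = subcol n p (D *m (invmx D *m v)) i.
  by rewrite mulKVmx.
by rewrite subcolD mulKmx // Dii_unit.
Qed.

Lemma subcolB' v i :
  subcol n p (B *m v) i = \sum_(k < n | e i k) blk n p B i k *m subcol n p v k.
Proof.
rewrite subcol_mul [RHS]big_mkcond /=; apply: eq_bigr => k _.
by case: ifP => // /negbT /hBb ->; rewrite mul0mx.
Qed.

Definition P K := - ((\sum_(tau < K.+1) (invmx D *m B) ^+ tau) *m invmx D *m g).

Lemma P_rec K : P K.+1 = invmx D *m (B *m P K - g).
Proof.
rewrite /P big_ord_recl expr0 /=.
under eq_bigr do rewrite exprS.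
rewrite -mulr_sumr !mulmxE mulrDl mul1r mulmxDl opprD mulmxBr mulmxN addrC.
by rewrite -!mulmxE !mulmxA mulmxN !mulmxA.
Qed.

Lemma prec_P K i : prec n p e D B g K i = subcol n p (P K) i.
Proof.
elim: K i => [|K IH] i /=.
  by rewrite /P big_ord1 expr0 mul1mx subcolN subcolDi.
rewrite P_rec subcolDi subcolB subcolB'; congr (_ *m (_ - _)).
by apply: eq_bigr => k _; rewrite IH.
Qed.

Lemma Hinv_eq K : - (S *m (\sum_(tau < K.+1) (S *m B *m S) ^+ tau) *m S *m g) = P K.
Proof.
rewrite /P; congr (- _); congr (_ *m g).
rewrite -hS !mulmxE mulr_sumr !mulr_suml; apply: eq_bigr => t _.
have H : forall t, S * (S * B * S) ^+ t = (S * S * B) ^+ t * S.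
  elim=> [|m IHm]; first by rewrite !expr0 mul1r mulr1.
  by rewrite [in RHS]exprS -[in RHS]mulrA -IHm exprS !mulrA.
by rewrite H -!mulrA.
Qed.
End Alg.

Section Ana.
Variables (R : realType) (n p : nat).
Local Notation idx := (@mxvec_index n p).

Lemma inv_partial m (h : 'rV[R]_m -> R) u v :
  (forall s w, h (s *: u + w) = h w) ->
  forall s z, derive h (s *: u + z) v = derive h z v.
Proof.
move=> H s z; apply: (@derive_eqdiff2 R m) => r.
by rewrite addrCA !H.
Qed.

Lemma subv_shift (k : 'I_(n * p)) i s (z : 'rV[R]_(n * p)) :
  node n p k != i -> subv n p (s *: ebasis k + z) i = subv n p z i.
Proof.
move=> hk; apply/rowP => a; rewrite !mxE /=.
case: eqP => [hk'|_]; last by rewrite mulr0 add0r.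
by move: hk; rewrite -hk' node_idx eqxx.
Qed.

Lemma hessf_off (fi : 'I_n -> 'rV[R]_p -> R -> R) tk yk i j a b : i != j ->
  hess (ffun_ n p fi ^~ tk) yk (idx i a) (idx j b) = 0.
Proof.
move=> hij; rewrite mxE /partial.
have -> : (fun z => derive (ffun_ n p fi ^~ tk) z (ebasis (idx j b))) =
  (fun z => derive (fun w => fi j (subv n p w j) tk) z (ebasis (idx j b))).
  apply: funext => z; apply: derive_eqdiff => s.
  rewrite /ffun_ -sumrB (bigD1 j) //= big1 ?addr0 // => k hk.
  by rewrite subv_shift ?subrr // node_idx eq_sym.
apply: derive_inv0 => s; apply: inv_partial => {}s w.
by rewrite subv_shift // node_idx.
Qed.

Variables (e : rel 'I_n) (gii : 'I_n -> 'rV[R]_p -> R -> R)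
  (gij : 'I_n -> 'I_n -> 'rV[R]_p -> 'rV[R]_p -> R -> R) (tk : R).

Definition Gj j (w : 'rV[R]_(n * p)) : R := gii j (subv n p w j) tk +
  \sum_i' \sum_(j' < n | e i' j')
     (if (i' == j) || (j' == j) then gij i' j' (subv n p w i') (subv n p w j') tk else 0).

Lemma gdiff j b s z :
  gfun_ n p e gii gij (s *: ebasis (idx j b) + z) tk - gfun_ n p e gii gij z tk =
  Gj j (s *: ebasis (idx j b) + z) - Gj j z.
Proof.
rewrite /gfun_ /Gj !opprD addrACA [RHS]addrACA; congr (_ + _).
  rewrite -sumrB (bigD1 j) //= big1 ?addr0 // => k hk.
  by rewrite subv_shift ?subrr // node_idx eq_sym.
rewrite -!sumrB; apply: eq_bigr => i' _; rewrite -!sumrB; apply: eq_bigr => j' _.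
case: ifP => [_|/negbT]; first by [].
rewrite negb_or => /andP [h1 h2].
by rewrite !subv_shift ?subrr // node_idx eq_sym.
Qed.

Lemma Gj_inv i j a s w : i != j -> ~~ e i j -> ~~ e j i ->
  Gj j (s *: ebasis (idx i a) + w) = Gj j w.
Proof.
move=> hij hn1 hn2; rewrite /Gj subv_shift ?node_idx //; congr (_ + _).
apply: eq_bigr => i' _; apply: eq_bigr => j' hj'.
case: ifP => // /orP [/eqP hi | /eqP hj].
  have h1 : node n p (idx i a) != i' by rewrite node_idx hi.
  have h2 : node n p (idx i a) != j'.
    by rewrite node_idx; apply: (contraNneq _ hn2) => hh; rewrite hh -hi.
  by rewrite (subv_shift _ _ s w h1) (subv_shift _ _ s w h2).
have h1 : node n p (idx i a) != j' by rewrite node_idx hj.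
have h2 : node n p (idx i a) != i'.
  by rewrite node_idx; apply: (contraNneq _ hn1) => hh; rewrite hh -hj.
by rewrite (subv_shift _ _ s w h1) (subv_shift _ _ s w h2).
Qed.

Lemma hessg_off yk i j a b : i != j -> ~~ e i j -> ~~ e j i ->
  hess (gfun_ n p e gii gij ^~ tk) yk (idx i a) (idx j b) = 0.
Proof.
move=> hij h1 h2; rewrite mxE /partial.
have -> : (fun z => derive (gfun_ n p e gii gij ^~ tk) z (ebasis (idx j b))) =
  (fun z => derive (Gj j) z (ebasis (idx j b))).
  by apply: funext => z; apply: derive_eqdiff => s; apply: gdiff.
apply: derive_inv0 => s; apply: inv_partial => {}s w.
exact: Gj_inv.
Qed.
End Ana.

Theorem proposition1 (R : realType) (n p : nat) (e : rel 'I_n)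
  (e_sym : symmetric e) (e_irr : irreflexive e)
  (e_conn : forall i j : 'I_n, connect e i j)
  (fi : 'I_n -> 'rV[R]_p -> R -> R)
  (gii : 'I_n -> 'rV[R]_p -> R -> R)
  (gij : 'I_n -> 'I_n -> 'rV[R]_p -> 'rV[R]_p -> R -> R)
  (hf : forall i t, C2 (fun u => fi i u t))
  (hgii : forall i t, C2 (fun u => gii i u t))
  (hgij : forall i j, e i j -> forall t,
     C2 (fun w : 'rV[R]_(p + p) => gij i j (lsubmx w) (rsubmx w) t))
  (hty : forall (y : 'rV[R]_(n * p)) (t : R) (a : 'I_(n * p)),
     derivable (fun s : R =>
        partial (fun z => ffun_ n p fi z s + gfun_ n p e gii gij z s) y a) t 1)
  (yk : 'rV[R]_(n * p)) (tk : R)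
  (hD : posdef (hess (ffun_ n p fi ^~ tk) yk + blkdiag n p (hess (gfun_ n p e gii gij ^~ tk) yk)))
  (Dmh : 'M[R]_(n * p))
  (hDmh : inv_sqrt (hess (ffun_ n p fi ^~ tk) yk + blkdiag n p (hess (gfun_ n p e gii gij ^~ tk) yk)) Dmh)
  (K : nat) :
  let F := fun y t => ffun_ n p fi y t + gfun_ n p e gii gij y t in
  let Dk := hess (ffun_ n p fi ^~ tk) yk + blkdiag n p (hess (gfun_ n p e gii gij ^~ tk) yk) in
  let Bk := blkdiag n p (hess (gfun_ n p e gii gij ^~ tk) yk) - hess (gfun_ n p e gii gij ^~ tk) yk in
  let gF := grad_ty F yk tk in
  let Hinv := Dmh *m (\sum_(tau < K.+1) (Dmh *m Bk *m Dmh) ^+ tau) *m Dmh in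
  let pK := - (Hinv *m gF) in
  forall i : 'I_n, prec n p e Dk Bk gF K i = subcol n p pK i.
Proof.
move=> F Dk Bk gF Hinv pK i.
have hDu : Dk \in unitmx by exact: posdef_unit.
have hS : Dmh *m Dmh = invmx Dk by case: hDmh.
have hDb : forall i j, i != j -> blk n p Dk i j = 0.
  move=> i1 j1 hij; apply/matrixP => a b; rewrite /Dk [LHS]mxE mxE hessf_off // mxE !node_idx.
  by rewrite (negbTE hij) add0r mxE.
have hBb : forall i j, ~~ e i j -> blk n p Bk i j = 0.
  move=> i1 j1 hij; apply/matrixP => a b; rewrite /Bk [LHS]mxE mxE mxE !node_idx.
  case: eqP => [->|/eqP hne]; first by rewrite !mxE subrr.
  by rewrite [RHS]mxE [X in _ + X]mxE hessg_off ?oppr0 ?add0r // e_sym.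
rewrite /pK /Hinv (Hinv_eq _ _ _ _ _ _ _ hS).
exact: (prec_P _ _ _ _ _ _ _ hDu hDb hBb).
Qed.
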